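(* For any frame $L$, the poset $\mathrm{F}(L)$ is Dedekind complete, i.e. every non-empty subset bounded above has a supremum in $\mathrm{F}(L)$ (and every non-empty subset bounded below has an infimum).
   Context: $\mathbb{Q}$ is the rationals. A sublocale of $L$ is a subset closed under arbitrary meets and such that $x\to s\in S$ for $x\in L$, $s\in S$; $\mathrm{coS}(L)$ is the frame of sublocales ordered by reverse inclusion, with pseudocomplement $^\ast$. The frame $\mathfrak{L}(\overline{\mathbb{IR}})$ is presented by generators $(r,\textsf{---})$, $(\textsf{---},s)$ ($r,s\in\mathbb{Q}$) with relations (r1) $(r,\textsf{---})\wedge(\textsf{---},s)=0$ for $r\ge s$; (r3) $(r,\textsf{---})=\bigvee_{s>r}(s,\textsf{---})$; (r4) $(\textsf{---},s)=\bigvee_{r<s}(\textsf{---},r)$. $\overline{\mathrm{F}}(L)$ is the set of frame homomorphisms $f\colon\mathfrak{L}(\overline{\mathbb{IR}})\to\mathrm{coS}(L)$ with $f(r,\textsf{---})^\ast\le f(\textsf{---},s)$ and $f(\textsf{---},s)^\ast\le f(r,\textsf{---})$ for $r<s$, ordered by $f\le g$ iff $f(r,\textsf{---})\le g(r,\textsf{---})$ and $g(\textsf{---},s)\le f(\textsf{---},s)$; it is a complete lattice with top $\boldsymbol{+\infty}$ ($(r,\textsf{---})\mapsto1$, $(\textsf{---},s)\mapsto0$) and bottom $\boldsymbol{-\infty}$ ($(r,\textsf{---})\mapsto0$, $(\textsf{---},s)\mapsto1$). $\mathrm{F}(L)$ is the subposet of $f\in\overline{\mathrm{F}}(L)$ such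 that for all $g\in\overline{\mathrm{F}}(L)$, $f\vee g=\boldsymbol{+\infty}\Rightarrow g=\boldsymbol{+\infty}$ and $f\wedge g=\boldsymbol{-\infty}\Rightarrow g=\boldsymbol{-\infty}$. *)

(* Defs.v *)
From mathcomp Require Import all_boot all_order all_algebra.
Set Implicit Arguments. Unset Strict Implicit. Unset Printing Implicit Defensive.
Import Order.TTheory GRing.Theory Num.Theory.

Record frame := Frame {
  fcar :> Type;
  fle : fcar -> fcar -> Prop;
  fle_refl : forall x, fle x x;
  fle_trans : forall x y z, fle x y -> fle y z -> fle x z;
  fle_anti : forall x y, fle x y -> fle y x -> x = y;
  fsup : (fcar -> Prop) -> fcar;
  fsup_ub : forall (A : fcar -> Prop) a, A a -> fle a (fsup A);
  fsup_least : forall (A : fcar -> Prop) u,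
      (forall a, A a -> fle a u) -> fle (fsup A) u;
  fmeet : fcar -> fcar -> fcar;
  fmeet_l : forall x y, fle (fmeet x y) x;
  fmeet_r : forall x y, fle (fmeet x y) y;
  fmeet_glb : forall x y z, fle z x -> fle z y -> fle z (fmeet x y);
  fdistr : forall x (A : fcar -> Prop),
      fmeet x (fsup A) = fsup (fun z => exists2 a, A a & z = fmeet x a)
}.

Section FrameDefs.
Variable L : frame.

Definition finf (A : L -> Prop) : L := fsup (fun x => forall a, A a -> fle x a).
Definition ftop : L := finf (fun _ => False).
Definition fimp (x y : L) : L := fsup (fun z => fle (fmeet z x) y).

Definition is_sublocale (S : L -> Prop) : Prop :=
  (forall A : L -> Prop, (forall a, A a -> S a) -> S (finf A)) /\
  (forall x s, S s -> S (fimp x s)).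

(* coS(L): sublocales ordered by REVERSE inclusion *)
Definition cos_le (S T : L -> Prop) : Prop := forall x, T x -> S x.
Definition cos_eq (S T : L -> Prop) : Prop := cos_le S T /\ cos_le T S.
(* bottom 0 of coS(L) = L itself, top 1 of coS(L) = {1} *)
Definition cos_zero : L -> Prop := fun _ => True.
Definition cos_one : L -> Prop := fun x => x = ftop.
Definition cos_gen (A : L -> Prop) : L -> Prop :=
  fun x => forall T, is_sublocale T -> (forall a, A a -> T a) -> T x.
Definition cos_meet (S T : L -> Prop) : L -> Prop := cos_gen (fun x => S x \/ T x).
Definition cos_join (F : (L -> Prop) -> Prop) : L -> Prop :=
  fun x => forall S, F S -> S x.
Definition cos_pc (S : L -> Prop) : L -> Prop :=
  cos_join (fun T => is_sublocale T /\ cos_eq (cos_meet S T) cos_zero).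

(* Frame homomorphisms L(IR-bar) -> coS(L), given by their values on   *)
(* the generators (r,---) |-> up r and (---,s) |-> down s, subject to  *)
(* the defining relations (r1),(r3),(r4) holding in coS(L).            *)
Record rfun := RFun { up : rat -> (L -> Prop); down : rat -> (L -> Prop) }.

Definition is_frame_hom_LIR (f : rfun) : Prop :=
  (forall r, is_sublocale (up f r)) /\
  (forall s, is_sublocale (down f s)) /\
  (forall r s : rat, (s <= r)%R -> cos_eq (cos_meet (up f r) (down f s)) cos_zero) /\
  (forall r : rat, cos_eq (up f r) (cos_join (fun S => exists2 s : rat, (r < s)%R & S = up f s))) /\
  (forall s : rat, cos_eq (down f s) (cos_join (fun S => exists2 r : rat, (r < s)%R & S = down f r))).

Definition in_Fbar (f : rfun) : Prop :=
  is_frame_hom_LIR f /\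
  (forall r s : rat, (r < s)%R ->
     cos_le (cos_pc (up f r)) (down f s) /\ cos_le (cos_pc (down f s)) (up f r)).

Definition rle (f g : rfun) : Prop :=
  (forall r, cos_le (up f r) (up g r)) /\ (forall s, cos_le (down g s) (down f s)).
Definition req (f g : rfun) : Prop := rle f g /\ rle g f.

Definition pinfty : rfun := RFun (fun _ => cos_one) (fun _ => cos_zero).
Definition minfty : rfun := RFun (fun _ => cos_zero) (fun _ => cos_one).

Definition join_is (f g u : rfun) : Prop :=
  in_Fbar u /\ rle f u /\ rle g u /\
  (forall v, in_Fbar v -> rle f v -> rle g v -> rle u v).
Definition meet_is (f g u : rfun) : Prop :=
  in_Fbar u /\ rle u f /\ rle u g /\
  (forall v, in_Fbar v -> rle v f -> rle v g -> rle v u).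

Definition in_F (f : rfun) : Prop :=
  in_Fbar f /\
  (forall g, in_Fbar g -> join_is f g pinfty -> req g pinfty) /\
  (forall g, in_Fbar g -> meet_is f g minfty -> req g minfty).

Definition F_dedekind_complete : Prop :=
  (forall S : rfun -> Prop,
     (forall f, S f -> in_F f) -> (exists f, S f) ->
     (exists u, in_F u /\ forall f, S f -> rle f u) ->
     exists s, in_F s /\ (forall f, S f -> rle f s) /\
               (forall u, in_F u -> (forall f, S f -> rle f u) -> rle s u)) /\
  (forall S : rfun -> Prop,
     (forall f, S f -> in_F f) -> (exists f, S f) ->
     (exists l, in_F l /\ forall f, S f -> rle l f) ->
     exists i, in_F i /\ (forall f, S f -> rle i f) /\
               (forall l, in_F l -> (forall f, S f -> rle l f) -> rle l i)).

End FrameDefs.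

(* Main.v *)
Require Import Defs.
From mathcomp Require Import all_boot all_order all_algebra.
From Stdlib Require Import FunctionalExtensionality.
Import Order.TTheory GRing.Theory Num.Theory.
Set Implicit Arguments. Unset Strict Implicit.

Section Basics.
Variable L : frame.
Implicit Types x y z : L.

Lemma fle_tr x y z : fle x y -> fle y z -> fle x z.
Proof. exact: fle_trans. Qed.

Lemma fmeetC x y : fmeet x y = fmeet y x.
Proof. apply: fle_anti; apply: fmeet_glb; (apply: fmeet_l || apply: fmeet_r). Qed.

Lemma finf_lb (A : L -> Prop) a : A a -> fle (finf A) a.
Proof. move=> Ha; apply: fsup_least => b Hb; exact: Hb. Qed.

Lemma finf_glb (A : L -> Prop) z : (forall a, A a -> fle z a) -> fle z (finf A).
Proof. move=> H; rewrite /finf; apply: (@fsup_ub L (fun x => forall a, A a -> fle x a)); exact: H. Qed.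

Lemma imp_intro z x y : fle (fmeet z x) y -> fle z (fimp x y).
Proof. move=> H; rewrite /fimp; apply: (@fsup_ub L (fun w => fle (fmeet w x) y)); exact: H. Qed.

Lemma imp_elim z x y : fle z (fimp x y) -> fle (fmeet z x) y.
Proof.
move=> H.
have H1 : fle (fmeet z x) (fmeet x (fimp x y)).
  apply: fmeet_glb; [apply: fmeet_r | exact: fle_tr (fmeet_l _ _) H].
apply: fle_tr H1 _; rewrite /fimp fdistr; apply: fsup_least => w [a Ha ->].
by rewrite fmeetC.
Qed.

Lemma ftop_max x : fle x (ftop L).
Proof. apply: finf_glb => a []. Qed.

Lemma sub_top S : is_sublocale S -> S (ftop L).
Proof. move=> [H1 _]; apply: H1 => a [] //. Qed.

Lemma meet_finf x y : fmeet x y = finf (fun z => z = x \/ z = y).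
Proof.
apply: fle_anti.
  apply: finf_glb => a [->|->]; [apply: fmeet_l | apply: fmeet_r].
apply: fmeet_glb; apply: finf_lb; by [left|right].
Qed.

Lemma sub_meet S x y : is_sublocale S -> S x -> S y -> S (fmeet x y).
Proof. move=> [H1 _] Hx Hy; rewrite meet_finf; apply: H1 => a [->|->] //. Qed.

Lemma sub_imp S x y : is_sublocale S -> S y -> S (fimp x y).
Proof. by move=> [_ H2] Hy; apply: H2. Qed.

Lemma imp_top x y : fle x y -> fimp x y = ftop L.
Proof.
move=> H; apply: fle_anti; first exact: ftop_max.
apply: imp_intro; exact: fle_tr (fmeet_r _ _) H.
Qed.

Definition sig (A : L -> Prop) y := finf (fun s => A s /\ fle y s).

Lemma sig_in A y : is_sublocale A -> A (sig A y).
Proof. move=> [H1 _]; apply: H1 => a [] //. Qed.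
Lemma sig_ge A y : fle y (sig A y).
Proof. apply: finf_glb => a [] //. Qed.
Lemma sig_least A y s : A s -> fle y s -> fle (sig A y) s.
Proof. move=> Hs Hy; apply: finf_lb; by split. Qed.
Lemma sig_mono A y y' : is_sublocale A -> fle y y' -> fle (sig A y) (sig A y').
Proof.
move=> HA H; apply: sig_least; first exact: sig_in.
exact: fle_tr H (sig_ge _ _).
Qed.


Lemma gen_split A T : is_sublocale A -> is_sublocale T ->
  forall y, cos_gen (fun x => A x \/ T x) y -> T (fimp (sig A y) y).
Proof.
move=> HA HT y Hy; apply: (Hy (fun y => T (fimp (sig A y) y))); last first.
  move=> a [Ha|Ha].
    rewrite imp_top; first exact: sub_top.
    apply: sig_least => //; exact: fle_refl.
  exact: sub_imp.
split.
- move=> M HM.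
  set m0 := finf M; set s0 := sig A m0.
  have -> : fimp s0 m0 = finf (fun z => exists2 m, M m & z = fimp s0 (fimp (sig A m) m)).
    apply: fle_anti.
      apply: finf_glb => _ [m Hm ->].
      apply: imp_intro; apply: imp_intro.
      have h1 := imp_elim (fle_refl (fimp s0 m0)).
      apply: fle_tr _ (fle_tr h1 (finf_lb Hm)).
      exact: fmeet_l.
    apply: imp_intro; apply: finf_glb => m Hm.
    set W := finf _.
    have hW : fle W (fimp s0 (fimp (sig A m) m)) by apply: finf_lb; exists m.
    have h2 := imp_elim (imp_elim hW).
    apply: fle_tr _ h2; apply: fmeet_glb; first exact: fle_refl.
    apply: fle_tr (fmeet_r _ _) _; apply: sig_mono => //; exact: finf_lb.
  case: (HT) => H1 _; apply: H1 => _ [m Hm ->]; apply: sub_imp => //; exact: HM.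
- move=> x y' Hy'.
  set s' := sig A (fimp x y'); set sy := sig A y'.
  have Hs : fle (fmeet s' x) sy.
    have : fle s' (fimp x sy).
      apply: sig_least.
        rewrite /sy; move: (sig_in y' HA) => h; exact: (sub_imp x HA h).
      apply: imp_intro; apply: fle_tr (imp_elim (fle_refl _)) (sig_ge _ _).
    by move/imp_elim.
  have -> : fimp s' (fimp x y') = fimp (fmeet s' x) (fimp sy y').
    apply: fle_anti.
      apply: imp_intro; apply: imp_intro.
      apply: fle_tr _ (imp_elim (imp_elim (fle_refl (fimp s' (fimp x y'))))).
      apply: fmeet_glb; first apply: fmeet_glb.
      + exact: fle_tr (fmeet_l _ _) (fmeet_l _ _).
      + exact: fle_tr (fmeet_l _ _) (fle_tr (fmeet_r _ _) (fmeet_l _ _)).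
      + exact: fle_tr (fmeet_l _ _) (fle_tr (fmeet_r _ _) (fmeet_r _ _)).
    apply: imp_intro; apply: imp_intro.
    apply: fle_tr _ (imp_elim (imp_elim (fle_refl (fimp (fmeet s' x) (fimp sy y'))))).
    apply: fmeet_glb; first apply: fmeet_glb.
    + exact: fle_tr (fmeet_l _ _) (fmeet_l _ _).
    + apply: fmeet_glb; [exact: fle_tr (fmeet_l _ _) (fmeet_r _ _) | exact: fmeet_r].
    + apply: fle_tr Hs; apply: fmeet_glb;
        [exact: fle_tr (fmeet_l _ _) (fmeet_r _ _) | exact: fmeet_r].
  exact: sub_imp.
Qed.

Lemma key A : is_sublocale A -> forall y, cos_gen (fun x => A x \/ cos_pc A x) y.
Proof.
move=> HA y T HT HAT.
have Hs : T (sig A y) by apply: HAT; left; exact: sig_in.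
have Ht : T (fimp (sig A y) y).
  apply: HAT; right => T' [HT' [HT'0 _]].
  apply: gen_split => //; exact: HT'0.
have -> : y = fmeet (sig A y) (fimp (sig A y) y).
  apply: fle_anti.
    apply: fmeet_glb; first exact: sig_ge.
    apply: imp_intro; exact: fmeet_l.
  rewrite fmeetC; exact: imp_elim (fle_refl _).
exact: sub_meet.
Qed.

End Basics.

Section CoS.
Variable L : frame.
Implicit Types a b x X Y : L -> Prop.
Local Open Scope ring_scope.

Lemma cle_refl X : cos_le X X. Proof. by []. Qed.
Lemma cle_trans X Y Z : cos_le X Y -> cos_le Y Z -> cos_le X Z.
Proof. move=> h1 h2 x /h2 /h1 //. Qed.

Lemma join_ub (F : (L -> Prop) -> Prop) X : F X -> cos_le X (cos_join F).
Proof. by move=> HX x Hx; apply: Hx. Qed.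
Lemma join_least (F : (L -> Prop) -> Prop) Y :
  (forall X, F X -> cos_le X Y) -> cos_le (cos_join F) Y.
Proof. by move=> H y Hy X HX; apply: H. Qed.
Lemma join_sub (F : (L -> Prop) -> Prop) :
  (forall X, F X -> is_sublocale X) -> is_sublocale (cos_join F).
Proof.
move=> H; split.
  move=> A HA X HX; case: (H X HX) => H1 _; apply: H1 => a /HA; apply; exact: HX.
move=> x s Hs X HX; case: (H X HX) => _ H2; apply: H2; exact: Hs.
Qed.

Lemma pc_sub a : is_sublocale (cos_pc a).
Proof. apply: join_sub => X []. done. Qed.

Lemma pc_anti b b' : cos_le b b' -> cos_le (cos_pc b') (cos_pc b).
Proof.
move=> H y Hy T [HT [HT0 HT1]]; apply: Hy; split => //; split => // z _ U HU HbU.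
apply: (HT0 z I U HU) => w [Hw|Hw]; apply: HbU; [left; exact: H | by right].
Qed.

Lemma pc_intro a x : is_sublocale x -> cos_eq (cos_meet a x) (@cos_zero L) ->
  cos_le x (cos_pc a).
Proof. by move=> Hx H0 y Hy; apply: Hy. Qed.

Lemma pc_elim a x : is_sublocale a -> cos_le x (cos_pc a) ->
  cos_eq (cos_meet a x) (@cos_zero L).
Proof.
move=> Ha Hx; split => // y _ T HT HaxT.
have K := key Ha y. apply: (K T HT) => z [Hz|Hz]; apply: HaxT; [by left | right; exact: Hx].
Qed.

Lemma meet_zero_C a b : cos_eq (cos_meet a b) (@cos_zero L) ->
  cos_eq (cos_meet b a) (@cos_zero L).
Proof.
move=> [H _]; split => // y _ T HT HbaT; apply: (H y I T HT) => z [Hz|Hz];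
  apply: HbaT; by [right|left].
Qed.

Lemma mid (r s : rat) : r < s -> exists t : rat, r < t /\ t < s.
Proof. move=> h; exists ((r + s) / 2); case: (midf_lt h) => -> ->; done. Qed.

Section FbarFacts.
Variable f : rfun L.
Hypothesis Hf : in_Fbar f.

Lemma fb_up_sub r : is_sublocale (up f r). Proof. by case: Hf => [[H _] _]. Qed.
Lemma fb_down_sub s : is_sublocale (down f s). Proof. by case: Hf => [[_ [H _]] _]. Qed.
Lemma fb_r1 (r s : rat) : s <= r -> cos_eq (cos_meet (up f r) (down f s)) (@cos_zero L).
Proof. by case: Hf => [[_ [_ [H _]]] _]; apply: H. Qed.
Lemma fb_r3 r : cos_eq (up f r) (cos_join (fun S => exists2 s : rat, (r < s)%R & S = up f s)).
Proof. by case: Hf => [[_ [_ [_ [H _]]]] _]. Qed.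
Lemma fb_r4 s : cos_eq (down f s) (cos_join (fun S => exists2 r : rat, (r < s)%R & S = down f r)).
Proof. by case: Hf => [[_ [_ [_ [_ H]]]] _]. Qed.
Lemma fb_pc1 (r s : rat) : r < s -> cos_le (cos_pc (up f r)) (down f s).
Proof. by case: Hf => _ H /H []. Qed.
Lemma fb_pc2 (r s : rat) : r < s -> cos_le (cos_pc (down f s)) (up f r).
Proof. by case: Hf => _ H /H []. Qed.

Lemma fb_up_anti (r r' : rat) : r < r' -> cos_le (up f r') (up f r).
Proof.
move=> h; apply: cle_trans (fb_r3 r).2; apply: join_ub; by exists r'.
Qed.
Lemma fb_down_mono (r r' : rat) : r < r' -> cos_le (down f r) (down f r').
Proof.
move=> h; apply: cle_trans _ (fb_r4 r').2; apply: join_ub; by exists r.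
Qed.
Lemma fb_down_pc t : cos_le (down f t) (cos_pc (up f t)).
Proof. apply: pc_intro; first exact: fb_down_sub. apply: fb_r1; exact: lexx. Qed.
End FbarFacts.

End CoS.

Section Sup.
Variable L : frame.
Local Open Scope ring_scope.
Variable S : rfun L -> Prop.
Hypothesis HS : forall f, S f -> in_Fbar f.

Definition U r := cos_join (fun X => exists2 f, S f & X = up f r).
Definition D (s : rat) := cos_join (fun X => exists2 t : rat, t < s & X = cos_pc (U t)).
Definition V (r : rat) := cos_join (fun X => exists2 s : rat, r < s & X = cos_pc (D s)).
Definition supS := RFun V D.

Lemma U_sub r : is_sublocale (U r).
Proof. apply: join_sub => X [f Hf ->]; exact: fb_up_sub (HS Hf) r. Qed.
Lemma D_sub s : is_sublocale (D s).
Proof. apply: join_sub => X [t _ ->]; exact: pc_sub. Qed.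
Lemma V_sub s : is_sublocale (V s).
Proof. apply: join_sub => X [t _ ->]; exact: pc_sub. Qed.

Lemma U_anti (t t' : rat) : t < t' -> cos_le (U t') (U t).
Proof.
move=> h; apply: join_least => X [f Hf ->].
apply: cle_trans (fb_up_anti (HS Hf) h) _; apply: join_ub; by exists f.
Qed.
Lemma D_mono (s s' : rat) : s <= s' -> cos_le (D s) (D s').
Proof.
move=> h; apply: join_least => X [t ht ->]; apply: join_ub; exists t => //.
exact: lt_le_trans ht h.
Qed.
Lemma V_anti (r r' : rat) : r <= r' -> cos_le (V r') (V r).
Proof.
move=> h; apply: join_least => X [s hs ->]; apply: join_ub; exists s => //.
exact: le_lt_trans h hs.
Qed.
Lemma D_le_pcU t : cos_le (D t) (cos_pc (U t)).
Proof. apply: join_least => X [t' ht ->]; apply: pc_anti; exact: U_anti. Qed.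
Lemma U_le_V (r t : rat) : r < t -> cos_le (U t) (V r).
Proof.
move=> h; apply: (@cle_trans _ _ (cos_pc (D t))); last by apply: join_ub; exists t.
apply: pc_intro; first exact: U_sub.
apply: meet_zero_C; apply: pc_elim; [exact: U_sub | exact: D_le_pcU].
Qed.

Lemma supS_Fbar : in_Fbar supS.
Proof.
split; [split; [|split; [|split; [|split]]] |].
- exact: V_sub.
- exact: D_sub.
- move=> r s hsr /=; apply: meet_zero_C; apply: pc_elim; first exact: D_sub.
  apply: join_least => X [s' hs' ->]; apply: pc_anti; apply: D_mono.
  exact: ltW (le_lt_trans hsr hs').
- move=> r /=; split.
    apply: join_least => X [s' hs' ->]; have [t [h1 h2]] := mid hs'.
    apply: (@cle_trans _ _ (V t)); first by apply: join_ub; exists s'.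
    apply: join_ub; by exists t.
  apply: join_least => X [s hs ->]; apply: V_anti; exact: ltW.
- move=> s /=; split.
    apply: join_least => X [t ht ->]; have [u [h1 h2]] := mid ht.
    apply: (@cle_trans _ _ (D u)); first by apply: join_ub; exists t.
    apply: join_ub; by exists u.
  apply: join_least => X [r hr ->]; apply: D_mono; exact: ltW.
- move=> r s hrs /=; split; last by apply: join_ub; exists s.
  have [t [h1 h2]] := mid hrs.
  apply: (@cle_trans _ _ (cos_pc (U t))); first by apply: pc_anti; exact: U_le_V.
  apply: join_ub; by exists t.
Qed.

Lemma supS_ub f : S f -> rle f supS.
Proof.
move=> Hf; split => [r|s] /=.
  apply: cle_trans (fb_r3 (HS Hf) r).1 _.
  apply: join_least => X [s hs ->].
  apply: (@cle_trans _ _ (U s)); first by apply: join_ub; exists f.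
  exact: U_le_V.
apply: join_least => X [t ht ->].
apply: (@cle_trans _ _ (cos_pc (up f t))); last exact: fb_pc1 (HS Hf) _ _ ht.
apply: pc_anti; apply: join_ub; by exists f.
Qed.

Lemma supS_least v : in_Fbar v -> (forall f, S f -> rle f v) -> rle supS v.
Proof.
move=> Hv Hub.
have downD : forall s, cos_le (down v s) (D s).
  move=> s; apply: cle_trans (fb_r4 Hv s).1 _.
  apply: join_least => X [t ht ->].
  apply: (@cle_trans _ _ (cos_pc (up v t))); first exact: fb_down_pc.
  apply: (@cle_trans _ _ (cos_pc (U t))); last by apply: join_ub; exists t.
  apply: pc_anti; apply: join_least => Y [f Hf ->]; exact: (Hub f Hf).1.
split => [r|s] /=; last exact: downD.
apply: join_least => X [s hs ->].
apply: (@cle_trans _ _ (cos_pc (down v s))); last exact: fb_pc2 Hv _ _ hs.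
apply: pc_anti; exact: downD.
Qed.

End Sup.

Section Neg.
Variable L : frame.
Local Open Scope ring_scope.

Lemma rle_trans (f g h : rfun L) : rle f g -> rle g h -> rle f h.
Proof.
move=> [a b] [c d]; split => [r|s]; [exact: cle_trans (a r) (c r) | exact: cle_trans (d s) (b s)].
Qed.

Lemma le_pinfty f : in_Fbar f -> rle f (pinfty L).
Proof. move=> Hf; split => [r|s] x //= ->; apply: sub_top; exact: fb_up_sub. Qed.
Lemma minfty_le f : in_Fbar f -> rle (minfty L) f.
Proof. move=> Hf; split => [r|s] x //= ->; apply: sub_top; exact: fb_down_sub. Qed.

Definition neg (f : rfun L) := RFun (fun r => down f (- r)) (fun s => up f (- s)).

Lemma negK f : neg (neg f) = f.
Proof.
case: f => u d; rewrite /neg /=; congr RFun; apply: functional_extensionality => r;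
  by rewrite opprK.
Qed.

Lemma neg_Fbar f : in_Fbar f -> in_Fbar (neg f).
Proof.
move=> Hf; split; [split; [|split; [|split; [|split]]] |] => /=.
- move=> r; exact: fb_down_sub.
- move=> r; exact: fb_up_sub.
- move=> r s hsr; apply: meet_zero_C; apply: (fb_r1 Hf); by rewrite lerN2.
- move=> r; split.
    apply: cle_trans (fb_r4 Hf (- r)).1 _.
    apply: join_least => X [t ht ->]; apply: join_ub; exists (- t); last by rewrite opprK.
    by rewrite ltrNr.
  apply: join_least => X [s hs ->]; apply: (fb_down_mono Hf); by rewrite ltrN2.
- move=> s; split.
    apply: cle_trans (fb_r3 Hf (- s)).1 _.
    apply: join_least => X [t ht ->]; apply: join_ub; exists (- t); last by rewrite opprK.
    by rewrite ltrNl.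
  apply: join_least => X [r hr ->]; apply: (fb_up_anti Hf); by rewrite ltrN2.
- move=> r s hrs; split.
    apply: (fb_pc2 Hf); by rewrite ltrN2.
  apply: (fb_pc1 Hf); by rewrite ltrN2.
Qed.

Lemma rle_neg f g : rle f g -> rle (neg g) (neg f).
Proof. by move=> [a b]; split => [r|s] /=; [apply: b | apply: a]. Qed.

Lemma rle_negE f g : rle (neg f) (neg g) -> rle g f.
Proof. by move/rle_neg; rewrite !negK. Qed.

Lemma neg_pinfty : neg (pinfty L) = minfty L. Proof. by []. Qed.
Lemma neg_minfty : neg (minfty L) = pinfty L. Proof. by []. Qed.

Lemma in_F_neg f : in_F f -> in_F (neg f).
Proof.
move=> [Hf [Hj Hm]]; split; first exact: neg_Fbar.
split.
- move=> g Hg [Hp [H1 [H2 Hl]]].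
  have : req (neg g) (minfty L).
    apply: Hm; first exact: neg_Fbar.
    split; first by rewrite -neg_pinfty; exact: neg_Fbar.
    split; first by apply: rle_negE; rewrite neg_minfty.
    split; first by rewrite -neg_pinfty; exact: rle_neg.
    move=> v Hv hvf hvg; apply: rle_negE; rewrite neg_minfty.
    apply: Hl; first exact: neg_Fbar.
      exact: rle_neg.
    by apply: rle_negE; rewrite negK.
  move=> [a b]; split.
    by apply: rle_negE; rewrite neg_pinfty.
  by apply: rle_negE; rewrite neg_pinfty.
- move=> g Hg [Hp [H1 [H2 Hl]]].
  have : req (neg g) (pinfty L).
    apply: Hj; first exact: neg_Fbar.
    split; first by rewrite -neg_minfty; exact: neg_Fbar.
    split; first by apply: rle_negE; rewrite neg_pinfty.
    split; first by rewrite -neg_minfty; exact: rle_neg.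
    move=> v Hv hvf hvg; apply: rle_negE; rewrite neg_pinfty.
    apply: Hl; first exact: neg_Fbar.
      exact: rle_neg.
    by apply: rle_negE; rewrite negK.
  move=> [a b]; split.
    by apply: rle_negE; rewrite neg_minfty.
  by apply: rle_negE; rewrite neg_minfty.
Qed.

Lemma sup_part (S : rfun L -> Prop) :
     (forall f, S f -> in_F f) -> (exists f, S f) ->
     (exists u, in_F u /\ forall f, S f -> rle f u) ->
     exists s, in_F s /\ (forall f, S f -> rle f s) /\
               (forall u, in_F u -> (forall f, S f -> rle f u) -> rle s u).
Proof.
move=> HSF [f0 Hf0] [u [Hu Hub]].
have HS : forall f, S f -> in_Fbar f by move=> f /HSF [].
exists (supS S); split; last split.
- split; first exact: supS_Fbar.
  split.
  + move=> g Hg [Hp [H1 [H2 Hl]]]; apply: Hu.2.1 => //.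
    split => //; split; first exact: le_pinfty Hu.1.
    split => // v Hv Huv Hgv; apply: Hl => //.
    apply: rle_trans Huv; exact: supS_least Hu.1 Hub.
  + move=> g Hg [Hp [H1 [H2 Hl]]]; apply: (HSF f0 Hf0).2.2 => //.
    split => //; split; first exact: minfty_le (HS f0 Hf0).
    split => // v Hv Hvf Hvg; apply: Hl => //.
    apply: rle_trans Hvf _; exact: supS_ub.
- exact: supS_ub.
- move=> u' [Hu' _] Hub'; exact: supS_least.
Qed.

End Neg.

Theorem proposition6p1 (L : frame) : F_dedekind_complete L.
Proof.
split; first exact: sup_part.
move=> S HSF [f0 Hf0] [l [Hl Hlb]].
have h1 : forall g, S (neg g) -> in_F g.
  by move=> g /HSF /in_F_neg; rewrite negK.
have h2 : exists g, S (neg g) by exists (neg f0); rewrite negK.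
have h3 : exists u, in_F u /\ forall g, S (neg g) -> rle g u.
  exists (neg l); split; first exact: in_F_neg.
  move=> g /Hlb; move/rle_neg; by rewrite negK.
have [s [Hs [Hub Hleast]]] := sup_part h1 h2 h3.
exists (neg s); split; first exact: in_F_neg.
split.
  move=> f Hf; apply: rle_negE; rewrite negK; apply: Hub; by rewrite negK.
move=> l' Hl' Hl'b; apply: rle_negE; rewrite negK; apply: Hleast; first exact: in_F_neg.
move=> g Hg; apply: rle_negE; rewrite negK; exact: Hl'b.
Qed.
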